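(* Let $\mu>\nu>0$ and let $(Y_i)_{i\ge0},(e_i)_{i\ge0}$ be sequences with values in $[0,1]$, with $e_0=1/2$, satisfying the decoy-state constraints (DS) for some reals $Q_\mu,Q_\nu,E_\mu,E_\nu$. Let $e_t\in(0,1/2]$ and set $a=1+\log_2(1-e_t)$, $b=\log_2(1-e_t)-\log_2 e_t$. Assume $$(a-b)\frac{\nu}{\mu+\nu}+(b-2a)\ge 0 .$$ Then, with $C_1=\mu^2e^{\nu}Q_\nu-\nu^2e^{\mu}Q_\mu$ and $C_2=\mu^2e^{\nu}E_\nu Q_\nu-\nu^2e^{\mu}E_\mu Q_\mu$, $$Y_1\big[1-h(e_1)\big]\ \ge\ \frac{1}{\mu\nu(\mu-\nu)}\Big[aC_1-bC_2+(a-b)\,\nu\big(\nu e^{\mu}E_\mu Q_\mu-\mu e^{\nu}E_\nu Q_\nu\big)\Big].$$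
   Context: $h(x)=-x\log_2 x-(1-x)\log_2(1-x)$ is the binary entropy function on $[0,1]$ (with $0\log_2 0=0$). For reals $\mu>\nu>0$, the decoy-state constraints (DS) on sequences $(Y_i)_{i\ge0},(e_i)_{i\ge0}$ with values in $[0,1]$ are $$Q_\mu=\sum_{i=0}^\infty \frac{\mu^i e^{-\mu}}{i!}Y_i,\quad Q_\nu=\sum_{i=0}^\infty \frac{\nu^i e^{-\nu}}{i!}Y_i,\quad E_\mu Q_\mu=\sum_{i=0}^\infty \frac{\mu^i e^{-\mu}}{i!}Y_ie_i,\quad E_\nu Q_\nu=\sum_{i=0}^\infty \frac{\nu^i e^{-\nu}}{i!}Y_ie_i.$$ *)

(* Defs.v *)
From Stdlib Require Import Reals Arith Factorial.
Open Scope R_scope.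

Definition log2 (x : R) : R := ln x / ln 2.

Definition xlog2x (x : R) : R := if Req_EM_T x 0 then 0 else x * log2 x.
Definition h (x : R) : R := - xlog2x x - xlog2x (1 - x).

Definition poisson (mu : R) (i : nat) : R := mu ^ i * exp (- mu) / INR (fact i).

Definition DS (mu nu Qmu Qnu Emu Enu : R) (Y e : nat -> R) : Prop :=
  infinite_sum (fun i => poisson mu i * Y i) Qmu /\
  infinite_sum (fun i => poisson nu i * Y i) Qnu /\
  infinite_sum (fun i => poisson mu i * Y i * e i) (Emu * Qmu) /\
  infinite_sum (fun i => poisson nu i * Y i * e i) (Enu * Qnu).

(* Main.v *)
Require Import Defs.
From Stdlib Require Import Reals Lra Lia Factorial.
Open Scope R_scope.

Lemma ln_le' x y : 0 < x -> x <= y -> ln x <= ln y.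
Proof. intros Hx Hxy. destruct (Rle_lt_or_eq_dec _ _ Hxy) as [H|H].
- left; apply ln_increasing; auto.
- subst; right; reflexivity. Qed.

Lemma ln_ineq y : 0 < y -> ln y <= y - 1.
Proof. intros Hy. pose proof (exp_ineq1_le (ln y)). rewrite exp_ln in H; lra. Qed.

Lemma ln2_pos : 0 < ln 2.
Proof. pose proof ln_lt_2; lra. Qed.

Lemma xlnx_bound x c : 0 < x -> 0 < c -> x * ln c + x - c <= x * ln x.
Proof.
  intros Hx Hc. pose proof (ln_ineq (c * / x)) as H.
  assert (0 < c * / x) by (apply Rmult_lt_0_compat; auto; apply Rinv_0_lt_compat; auto).
  specialize (H H0). rewrite ln_mult, ln_Rinv in H; auto; try (apply Rinv_0_lt_compat; auto).
  apply Rmult_le_compat_l with (r := x) in H; [|lra].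
  replace (x * (c * / x - 1)) with (c - x) in H by (field; lra). nra.
Qed.

Lemma xlog2x_bound x c : 0 <= x -> 0 < c -> (x * ln c + x - c) / ln 2 <= xlog2x x.
Proof.
  intros Hx Hc. pose proof ln2_pos. unfold xlog2x.
  destruct (Req_EM_T x 0) as [E|E].
  - subst. unfold Rdiv. replace (0 * ln c + 0 - c) with (- c) by ring.
    assert (0 < / ln 2) by (apply Rinv_0_lt_compat; auto). nra.
  - unfold log2. assert (0 < x) by lra.
    replace (x * (ln x / ln 2)) with ((x * ln x) / ln 2) by (field; lra).
    unfold Rdiv. apply Rmult_le_compat_r; [left; apply Rinv_0_lt_compat; auto|].
    apply xlnx_bound; auto.
Qed.

Lemma entropy_bound x et : 0 <= x <= 1 -> 0 < et < 1 ->
  (1 + log2 (1 - et)) - (log2 (1 - et) - log2 et) * x <= 1 - h x.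
Proof.
  intros Hx Het. pose proof ln2_pos.
  pose proof (xlog2x_bound x et ltac:(lra) ltac:(lra)) as B1.
  pose proof (xlog2x_bound (1 - x) (1 - et) ltac:(lra) ltac:(lra)) as B2.
  assert (E : (x * ln et + x - et) / ln 2 + ((1 - x) * ln (1 - et) + (1 - x) - (1 - et)) / ln 2
     = (1 + log2 (1 - et)) - (log2 (1 - et) - log2 et) * x - 1)
    by (unfold log2; field; lra).
  unfold h. lra.
Qed.

Lemma sum_lin (A B C D : nat -> R) (k1 k2 k3 k4 : R) n :
  sum_f_R0 (fun i => k1 * A i + k2 * B i + k3 * C i + k4 * D i) n =
  k1 * sum_f_R0 A n + k2 * sum_f_R0 B n + k3 * sum_f_R0 C n + k4 * sum_f_R0 D n.
Proof. induction n; simpl; [ring|]. rewrite IHn; ring. Qed.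

Lemma cv_const k : Un_cv (fun _ => k) k.
Proof. intros eps He. exists 0%nat. intros. unfold R_dist.
  replace (k - k) with 0 by ring. rewrite Rabs_R0; auto. Qed.

Lemma cv_scal u l k : Un_cv u l -> Un_cv (fun n => k * u n) (k * l).
Proof. intros H. apply (CV_mult (fun _ => k) u); auto. apply cv_const. Qed.

Lemma cv_le u l M : Un_cv u l -> (forall n, (1 <= n)%nat -> u n <= M) -> l <= M.
Proof.
  intros Hc Hb. destruct (Rle_or_lt l M) as [H|H]; auto.
  destruct (Hc (l - M)) as [N HN]; [lra|].
  specialize (HN (max N 1) (Nat.le_max_l _ _)).
  specialize (Hb (max N 1) (Nat.le_max_r _ _)).
  unfold R_dist in HN. apply Rabs_def2 in HN. lra.
Qed.

Lemma pois x i : poisson x i = x ^ i / INR (fact i) / exp x.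
Proof. unfold poisson. rewrite exp_Ropp. field. split.
  - apply INR_fact_neq_0.
  - pose proof (exp_pos x); lra. Qed.

Theorem mainTheorem4 (mu nu : R) (Y e : nat -> R) (Qmu Qnu Emu Enu et : R) :
  0 < nu -> nu < mu ->
  (forall i, 0 <= Y i <= 1) -> (forall i, 0 <= e i <= 1) ->
  e 0%nat = 1 / 2 ->
  DS mu nu Qmu Qnu Emu Enu Y e ->
  0 < et <= 1 / 2 ->
  let a := 1 + log2 (1 - et) in
  let b := log2 (1 - et) - log2 et in
  (a - b) * (nu / (mu + nu)) + (b - 2 * a) >= 0 ->
  let C1 := mu ^ 2 * exp nu * Qnu - nu ^ 2 * exp mu * Qmu in
  let C2 := mu ^ 2 * exp nu * Enu * Qnu - nu ^ 2 * exp mu * Emu * Qmu in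
  Y 1%nat * (1 - h (e 1%nat)) >=
    / (mu * nu * (mu - nu)) *
    (a * C1 - b * C2 + (a - b) * nu * (nu * exp mu * Emu * Qmu - mu * exp nu * Enu * Qnu)).
Proof.
  intros Hnu Hmn HY He He0 [D1 [D2 [D3 D4]]] Het a b Hc C1 C2.
  pose proof ln2_pos as L2.
  assert (Ha : 0 <= a).
  { unfold a, log2. replace (1 + ln (1 - et) / ln 2) with ((ln 2 + ln (1 - et)) / ln 2) by (field; lra).
    unfold Rdiv. apply Rmult_le_pos; [|left; apply Rinv_0_lt_compat; auto].
    pose proof (ln_le' (/ 2) (1 - et) ltac:(lra) ltac:(lra)). rewrite ln_Rinv in H; lra. }
  assert (Hab : a - b <= 0).
  { unfold a, b, log2. replace (1 + ln (1 - et) / ln 2 - (ln (1 - et) / ln 2 - ln et / ln 2))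
      with ((ln 2 + ln et) * / ln 2) by (field; lra).
    assert (0 < / ln 2) by (apply Rinv_0_lt_compat; auto).
    pose proof (ln_le' et (/ 2) ltac:(lra) ltac:(lra)). rewrite ln_Rinv in H0; [|lra]. nra. }
  assert (Hc' : (a - b) * nu + (b - 2 * a) * (mu + nu) >= 0).
  { replace ((a - b) * nu) with ((a - b) * (nu / (mu + nu)) * (mu + nu)) by (field; lra).
    assert (0 < mu + nu) by lra. nra. }
  set (k1 := a * mu ^ 2 * exp nu).
  set (k2 := - (a * nu ^ 2 * exp mu)).
  set (k3 := - (b * mu ^ 2 * exp nu) - (a - b) * nu * mu * exp nu).
  set (k4 := b * nu ^ 2 * exp mu + (a - b) * nu * nu * exp mu).
  set (t := fun i => k1 * (poisson nu i * Y i) + k2 * (poisson mu i * Y i)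
                  + k3 * (poisson nu i * Y i * e i) + k4 * (poisson mu i * Y i * e i)).
  assert (Hcv : Un_cv (fun n => sum_f_R0 t n) (k1 * Qnu + k2 * Qmu + k3 * (Enu * Qnu) + k4 * (Emu * Qmu))).
  { eapply (Un_cv_ext); [intros n; unfold t; symmetry; apply sum_lin|].
    apply CV_plus; [apply CV_plus; [apply CV_plus|]|]; apply cv_scal; assumption. }
  assert (Ht1 : t 1%nat = mu * nu * (mu - nu) * (Y 1%nat * (a - b * e 1%nat))).
  { unfold t, k1, k2, k3, k4. rewrite !pois. simpl (fact 1). simpl INR.
    field. split; pose proof (exp_pos mu); pose proof (exp_pos nu); lra. }
  assert (Ht0 : t 0%nat <= 0).
  { replace (t 0%nat) with (- (Y 0%nat * (mu - nu) / 2 * ((a - b) * nu + (b - 2 * a) * (mu + nu)))).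
    2:{ unfold t, k1, k2, k3, k4. rewrite !pois, He0. simpl (fact 0). simpl INR.
        field. split; pose proof (exp_pos mu); pose proof (exp_pos nu); lra. }
    pose proof (HY 0%nat). assert (0 <= Y 0%nat * (mu - nu) / 2) by (apply Rmult_le_pos; [apply Rmult_le_pos|]; lra).
    nra. }
  assert (Ht2 : forall i, (2 <= i)%nat -> t i <= 0).
  { intros i Hi. destruct i as [|[|i]]; [lia|lia|].
    destruct i as [|k].
    - replace (t 2%nat) with ((a - b) * (mu * nu ^ 2 * (mu - nu) / 2 * (Y 2%nat * e 2%nat))).
      2:{ unfold t, k1, k2, k3, k4. rewrite !pois. simpl (fact 2). simpl INR.
          field. split; pose proof (exp_pos mu); pose proof (exp_pos nu); lra. }
      assert (0 <= mu * nu ^ 2 * (mu - nu) / 2 * (Y 2%nat * e 2%nat)).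
      { pose proof (HY 2%nat); pose proof (He 2%nat).
        apply Rmult_le_pos; [|apply Rmult_le_pos; lra].
        unfold Rdiv; apply Rmult_le_pos; [|lra]. apply Rmult_le_pos; [|lra].
        apply Rmult_le_pos; [lra|]. apply pow_le; lra. }
      nra.
    - set (F := INR (fact (S (S (S k))))).
      assert (HF : 0 < F) by (apply lt_0_INR, lt_O_fact).
      set (m := mu ^ k). set (n := nu ^ k).
      assert (Hn : 0 <= n) by (apply pow_le; lra).
      assert (Hmn' : n <= m) by (apply pow_incr; lra).
      set (p := mu * m - nu * n).
      assert (Hp : 0 <= p) by (unfold p; nra).
      set (y := Y (S (S (S k)))). set (ee := e (S (S (S k)))).
      assert (Hy : 0 <= y) by (apply HY). assert (Hee : 0 <= ee <= 1) by (apply He).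
      replace (t (S (S (S k)))) with
        (- (/ F * (mu * nu ^ 2) * y * (a * mu * p * (1 - ee) + ee * (b - a) * nu * n * (mu - nu)))).
      2:{ unfold t, k1, k2, k3, k4. rewrite !pois. fold F y ee. cbn [pow]. fold m n. unfold p.
          field. split; [|split]; pose proof (exp_pos mu); pose proof (exp_pos nu); lra. }
      assert (0 <= / F * (mu * nu ^ 2) * y).
      { apply Rmult_le_pos; auto. apply Rmult_le_pos; [left; apply Rinv_0_lt_compat; auto|].
        apply Rmult_le_pos; [lra|]. apply pow_le; lra. }
      assert (0 <= a * mu * p * (1 - ee)).
      { apply Rmult_le_pos; [|lra]. apply Rmult_le_pos; auto. apply Rmult_le_pos; lra. }
      assert (0 <= ee * (b - a) * nu * n * (mu - nu)).
      { apply Rmult_le_pos; [|lra]. apply Rmult_le_pos; auto. apply Rmult_le_pos; [|lra].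
        apply Rmult_le_pos; lra. }
      nra. }
  assert (Hsum : forall n, (1 <= n)%nat -> sum_f_R0 t n <= t 1%nat).
  { intros n Hn. induction n as [|n IH]; [lia|].
    destruct n as [|n].
    - simpl. lra.
    - simpl sum_f_R0. simpl sum_f_R0 in IH.
      pose proof (Ht2 (S (S n)) ltac:(lia)). specialize (IH ltac:(lia)). lra. }
  pose proof (cv_le _ _ _ Hcv Hsum) as Hle.
  rewrite Ht1 in Hle.
  pose proof (entropy_bound (e 1%nat) et (He 1%nat) ltac:(lra)) as Hent. fold a b in Hent.
  assert (HD : 0 < mu * nu * (mu - nu)) by (apply Rmult_lt_0_compat; [apply Rmult_lt_0_compat|]; lra).
  replace (a * C1 - b * C2 + (a - b) * nu * (nu * exp mu * Emu * Qmu - mu * exp nu * Enu * Qnu))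
    with (k1 * Qnu + k2 * Qmu + k3 * (Enu * Qnu) + k4 * (Emu * Qmu))
    by (unfold C1, C2, k1, k2, k3, k4; ring).
  apply Rle_ge.
  apply Rle_trans with (Y 1%nat * (a - b * e 1%nat)).
  - apply Rmult_le_reg_l with (mu * nu * (mu - nu)); auto.
    rewrite <- Rmult_assoc, Rinv_r, Rmult_1_l; lra.
  - apply Rmult_le_compat_l; [apply HY|]. lra.
Qed.
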